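(* Let $G$ be a non-regular simple graph on $n$ vertices, and let $u,v$ be vertices of $G$ with $d_G(u)<d_G(v)$. Let $R:=V(G)\setminus\{u,v\}$, $X:=N(u)\setminus N[v]$, and $Z:=\{w\in R: w\notin N(u)\cup N(v)\}$. If $F_k(G)$ is regular for some integer $k$ with $2\le k\le n-2$, then $X=\emptyset$ and $Z=\emptyset$.
   Context: For a simple graph $G=(V,E)$ on $n$ vertices and an integer $1\le k<n$, the $k$-token graph $F_k(G)$ is the graph whose vertices are all $k$-element subsets of $V$, two such subsets $A,B$ being adjacent whenever their symmetric difference $A\triangle B$ is a pair $\{a,b\}$ with $a$ adjacent to $b$ in $G$. $N(x)$ is the set of neighbors of $x$ in $G$, $N[x]=N(x)\cup\{x\}$, and $d_G(x)=|N(x)|$. *)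

(* Defs.v *)
From mathcomp Require Import all_boot.
Set Implicit Arguments. Unset Strict Implicit. Unset Printing Implicit Defensive.

Definition simple_graph (T : finType) (e : rel T) : Prop :=
  irreflexive e /\ symmetric e.

Definition nbhd (T : finType) (e : rel T) (x : T) : {set T} := [set y | e x y].
Definition deg (T : finType) (e : rel T) (x : T) : nat := #|nbhd e x|.

Definition regular (T : finType) (e : rel T) : Prop :=
  forall x y : T, deg e x = deg e y.

(* adjacency in the k-token graph: A (+) B = {a,b} with a ~ b in G *)
Definition token_adj (T : finType) (e : rel T) (A B : {set T}) : bool :=
  [exists a : T, exists b : T,
     e a b && ((A :\: B) :|: (B :\: A) == [set a; b])].

Definition token_vertices (T : finType) (k : nat) : {set {set T}} :=
  [set A : {set T} | #|A| == k].

Definition token_deg (T : finType) (e : rel T) (k : nat) (A : {set T}) : nat :=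
  #|[set B in token_vertices T k | token_adj e A B]|.

Definition token_regular (T : finType) (e : rel T) (k : nat) : Prop :=
  forall A B : {set T}, A \in token_vertices T k -> B \in token_vertices T k ->
    token_deg e k A = token_deg e k B.

(* Main.v *)
Require Import Defs.
From mathcomp Require Import all_boot zify.
Set Implicit Arguments. Unset Strict Implicit. Unset Printing Implicit Defensive.

Section Aux.
Variables (T : finType) (e : rel T).
Hypothesis (Hirr : irreflexive e) (Hsym : symmetric e).

Lemma pr_inj1 (w : T) : injective (fun b : T => (w, b)).
Proof. by move=> x y [->]. Qed.
Lemma pr_inj2 (w : T) : injective (fun a : T => (a, w)).
Proof. by move=> x y [->]. Qed.

Definition cut (A : {set T}) : nat :=
  #|[set p : T * T | (p.1 \in A) && (p.2 \notin A) && e p.1 p.2]|.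

Lemma card_sumb (X : finType) (P : pred X) :
  #|[set x | P x]| = \sum_x (P x : nat).
Proof.
rewrite -sum1dep_card big_mkcond /=; apply: eq_bigr => x _; by case: (P x).
Qed.

Lemma deg_pairs w : deg e w = #|[set p : T * T | (p.1 == w) && e p.1 p.2]|.
Proof.
rewrite /deg -(card_imset _ (@pr_inj1 w)); apply: eq_card => -[a b].
rewrite !inE /=; apply/imsetP/idP => [[c] |/andP [/eqP -> eb]].
  by rewrite inE => ec [-> ->]; rewrite eqxx.
by exists b; rewrite ?inE.
Qed.

Lemma nS_pairs1 w S : #|nbhd e w :&: S| =
   #|[set p : T * T | (p.1 == w) && (p.2 \in S) && e p.1 p.2]|.
Proof.
rewrite -(card_imset _ (@pr_inj1 w)); apply: eq_card => -[a b].
rewrite !inE /=; apply/imsetP/idP => [[c] |/andP [/andP [/eqP -> bS] eb]].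
  by rewrite !inE => /andP [ec cS] [-> ->]; rewrite eqxx cS.
by exists b; rewrite ?inE ?eb.
Qed.

Lemma nS_pairs2 w S : #|nbhd e w :&: S| =
   #|[set p : T * T | (p.2 == w) && (p.1 \in S) && e p.1 p.2]|.
Proof.
rewrite -(card_imset _ (@pr_inj2 w)); apply: eq_card => -[a b].
rewrite !inE /=; apply/imsetP/idP => [[c] |/andP [/andP [/eqP -> bS] eb]].
  by rewrite !inE => /andP [ec cS] [-> ->]; rewrite eqxx cS Hsym.
by exists a => //; rewrite !inE bS andbT Hsym.
Qed.

Lemma cut_add (S : {set T}) (w : T) : w \notin S ->
  cut (w |: S) + 2 * #|nbhd e w :&: S| = cut S + deg e w.
Proof.
move=> wS; rewrite mul2n -addnn {1}nS_pairs1 nS_pairs2 deg_pairs /cut.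
rewrite !card_sumb -!big_split /=; apply: eq_bigr => [[a b]] _ /=.
rewrite !inE.
case eab: (e a b); last by rewrite !andbF.
have ab: a != b by apply: contraTneq eab => ->; rewrite Hirr.
case: (a =P w) => [aw|naw]; case: (b =P w) => [bw|nbw].
- by move: ab; rewrite aw bw eqxx.
- by subst a; rewrite (negbTE wS) /=; case: (b \in S).
- by subst b; rewrite (negbTE wS) /=; case: (a \in S).
- by rewrite /= !andbT !addn0.
Qed.

Lemma symdiff_char (A B : {set T}) a b :
  A :\: B :|: B :\: A = [set a; b] -> a \in A -> b \notin A ->
  B = b |: (A :\ a).
Proof.
move=> H aA bA; apply/setP => z; have Hz : (z \in A :\: B :|: B :\: A) = (z \in [set a; b]) by rewrite H. rewrite !inE in Hz *; move: Hz.
have ab : a != b by apply: contraNneq bA => <-.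
case: (boolP (z == a)) => [/eqP ->|za].
  by rewrite (negbTE ab) aA /=; case: (a \in B).
case: (boolP (z == b)) => [/eqP ->|zb].
  by rewrite (negbTE bA) /= ?andbF; case: (b \in B).
by case: (z \in A); case: (z \in B).
Qed.

Lemma subset_eq_card (A B : {set T}) : #|A| = #|B| -> B \subset A -> A = B.
Proof. by move=> c s; apply/eqP; rewrite eq_sym eqEcard s c leqnn. Qed.

Lemma token_deg_cut k (A : {set T}) : #|A| = k -> token_deg e k A = cut A.
Proof.
move=> cA.
pose f := fun p : T * T => p.2 |: (A :\ p.1).
pose P := [set p : T * T | (p.1 \in A) && (p.2 \notin A) && e p.1 p.2].
have finj : {in P &, injective f}.
  move=> [a b] [c d]; rewrite !inE /= /f /= => /andP [/andP [aA bA] _]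
    /andP [/andP [cA' dA] _] Hf.
  have bd : b = d.
    have : b \in d |: (A :\ c) by rewrite -Hf setU11.
    by rewrite !inE (negbTE bA) andbF orbF => /eqP.
  have ac : a = c.
    have : a \notin b |: (A :\ a).
      rewrite !inE eqxx /= orbF; apply: contraNneq bA => <-; exact aA.
    rewrite Hf !inE aA andbT negb_or => /andP [_]; by rewrite negbK => /eqP.
  by rewrite ac bd.
rewrite /token_deg /cut -(card_in_imset finj); apply: eq_card => B.
rewrite !inE; apply/andP/imsetP.
- move=> [/eqP cB /existsP [a /existsP [b /andP [eab /eqP H]]]].
  have ab : a != b by apply: contraTneq eab => ->; rewrite Hirr.
  have key z : (z \in B) != (z \in A) -> (z == a) || (z == b).
    have : z \in [set a; b] = (z \in A :\: B :|: B :\: A) by rewrite H.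
    by rewrite !inE => ->; case: (z \in A); case: (z \in B).
  have AeqB : A != B.
    apply/negP => /eqP AB.
    have : a \in [set a; b] by rewrite !inE eqxx.
    by rewrite -H AB setDv setU0 inE.
  have main a' b' : e a' b' -> a' \in A -> b' \notin A ->
    A :\: B :|: B :\: A = [set a'; b'] ->
    exists2 p, p \in P & B = f p.
    move=> eab' aA' bA' H'; exists (a', b'); first by rewrite !inE aA' bA'.
    exact: symdiff_char H' aA' bA'.
  case: (boolP (a \in A)) => aA; case: (boolP (b \in A)) => bA.
  + case/negP: AeqB; apply/eqP; apply: subset_eq_card; first by rewrite cA cB.
    apply/subsetP => z zB; apply/negPn/negP => zA.
    by move: (key z); rewrite zB (negbTE zA) => /(_ isT) /orP [] /eqP zab;
      [move: aA | move: bA]; rewrite -zab (negbTE zA).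
  + exact: main eab aA bA H.
  + apply: (main b a); [by rewrite Hsym | done | done | by rewrite H; apply/setP => z; rewrite !inE orbC].
  + case/negP: AeqB; apply/eqP; apply/esym; apply: subset_eq_card; first by rewrite cA cB.
    apply/subsetP => z zA; apply/negPn/negP => zB.
    by move: (key z); rewrite zA (negbTE zB) => /(_ isT) /orP [] /eqP zab;
      [move: aA | move: bA]; rewrite -zab zA.
- move=> [[a b]]; rewrite !inE /= => /andP [/andP [aA bA] eab] ->; rewrite /f /=.
  have ab : a != b by apply: contraNneq bA => <-.
  split.
    rewrite cardsU1 !inE negb_and bA orbT /=.
    move: cA; rewrite (cardsD1 a) aA => <-; by [].
  apply/existsP; exists a; apply/existsP; exists b; rewrite eab /=.
  apply/eqP/setP => z; rewrite !inE.
  case: (boolP (z == a)) => [/eqP ->|za].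
    by rewrite (negbTE ab) aA.
  case: (boolP (z == b)) => [/eqP ->|zb].
    by rewrite (negbTE bA).
  by case: (z \in A).
Qed.

Lemma cardIU1 (N S : {set T}) a : a \notin S ->
  #|N :&: (a |: S)| = (a \in N) + #|N :&: S|.
Proof.
move=> aS; case: (boolP (a \in N)) => aN.
  have -> : N :&: (a |: S) = a |: (N :&: S).
    by apply/setP => z; rewrite !inE; case: (z =P a) => [->|]; rewrite ?aN ?andbT.
  by rewrite cardsU1 !inE (negbTE aS) andbF.
have -> : N :&: (a |: S) = N :&: S.
  apply/setP => z; rewrite !inE; case: (z =P a) => [->|] //=.
  by rewrite (negbTE aN) (negbTE aS).
by [].
Qed.
End Aux.

Theorem corollary2 (T : finType) (e : rel T) (u v : T) (k : nat) :
  simple_graph e ->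
  ~ regular e ->
  deg e u < deg e v ->
  2 <= k <= #|T| - 2 ->
  token_regular e k ->
  [set w | (w \in nbhd e u) && (w \notin nbhd e v) && (w != v)] = set0 /\
  [set w | (w != u) && (w != v) && (w \notin nbhd e u) && (w \notin nbhd e v)] = set0.
Proof.
move=> [Hirr Hsym] _ dlt /andP [k2 kn] Hreg.
have uv : u != v by apply: contraTneq dlt => ->; rewrite ltnn.
have key (S : {set T}) : u \notin S -> v \notin S -> #|S| = k.-1 ->
    deg e u + 2 * #|nbhd e v :&: S| = deg e v + 2 * #|nbhd e u :&: S|.
  move=> uS vS cS.
  have cu := cut_add Hirr Hsym uS; have cv := cut_add Hirr Hsym vS.
  have cuS : #|u |: S| = k by rewrite cardsU1 uS cS; lia.
  have cvS : #|v |: S| = k by rewrite cardsU1 vS cS; lia.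
  have := Hreg (u |: S) (v |: S); rewrite !inE cuS cvS eqxx => /(_ isT isT).
  rewrite (token_deg_cut Hirr Hsym cuS) (token_deg_cut Hirr Hsym cvS).
  lia.
have [y [yv yu yneu]] : exists y, [/\ y \in nbhd e v, y \notin nbhd e u & y != u].
  have : ~~ (nbhd e v :\ u \subset nbhd e u :\ v).
    apply: contraTN dlt => sub; rewrite -leqNgt.
    have := subset_leq_card sub.
    rewrite /deg (cardsD1 u (nbhd e v)) (cardsD1 v (nbhd e u)) !inE [e v u]Hsym.
    by rewrite leq_add2l.
  case/subsetPn => z; rewrite !inE => /andP [zu zv].
  rewrite negb_and negbK => /orP [/eqP zv'|nz].
    by move: zv; rewrite zv' Hirr.
  by exists z; split; rewrite ?inE.
suff nw : forall w, w != u -> w != v -> w \notin nbhd e v -> False.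
  split; apply/setP => w; rewrite !inE; apply/negbTE/negP.
    move=> /andP [/andP [wu wv] wnv]; apply: (nw w) => //; last by rewrite inE.
    by apply: contraTneq wu => ->; rewrite Hirr.
  move=> /andP [/andP [/andP [a b] c] d]; apply: (nw w a b); by rewrite inE.
move=> x xu xv xnv.
have xy : x != y by apply: contraNneq xnv => ->.
pose Q := u |: (v |: (x |: [set y])).
pose R' := ~: Q.
have c4 : #|Q| <= 4.
  rewrite /Q !cardsU1 cards1.
  have := leq_b1 (u \notin v |: (x |: [set y])).
  have := leq_b1 (v \notin x |: [set y]).
  have := leq_b1 (x \notin [set y]).
  lia.
have cR : #|Q| + #|R'| = #|T| by rewrite cardsC.
pose s := take (k - 2) (enum R').
pose S0 := [set z in s].
have cS0 : #|S0| = k - 2.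
  rewrite cardsE; have/card_uniqP -> : uniq s by rewrite take_uniq ?enum_uniq.
  rewrite size_take -cardE; case: ifP => //; lia.
have S0R z : z \in S0 -> z \notin Q.
  by rewrite inE => /mem_take; rewrite mem_enum inE.
have uS0 : u \notin S0 by apply: contraTN isT => /S0R; rewrite !inE eqxx.
have vS0 : v \notin S0 by apply: contraTN isT => /S0R; rewrite !inE eqxx !orbT.
have xS0 : x \notin S0 by apply: contraTN isT => /S0R; rewrite !inE eqxx !orbT.
have yS0 : y \notin S0 by apply: contraTN isT => /S0R; rewrite !inE eqxx !orbT.
have k1 := key (y |: S0).
have k2' := key (x |: S0).
rewrite !cardIU1 // !cardsU1 yS0 xS0 !inE cS0 in k1 k2'.
rewrite !inE in yv yu xnv.
rewrite (negbTE yu) (negbTE xnv) yv in k1 k2'.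
have us : (u \in s) = false by move: uS0; rewrite inE => /negbTE.
have vs : (v \in s) = false by move: vS0; rewrite inE => /negbTE.
have yv' : (y == v) = false by apply/negbTE; apply: contraTneq yv => ->; rewrite Hirr.
move: k1 k2'; rewrite us vs !orbF !(eq_sym u) !(eq_sym v) (negbTE yneu) (negbTE xu) (negbTE xv) yv' /=.
have kk : 1 + (k - 2) = k.-1.
  clear -k2; case: k k2 => [|[|m]] // _; by rewrite !subSS subn0 add1n.
move=> /(_ isT isT kk) h1 /(_ isT isT kk).
move: h1 (leq_b1 (e u x)).
move: (deg e u) (deg e v) #|nbhd e v :&: S0| #|nbhd e u :&: S0| (nat_of_bool (e u x)).
move=> a b c d f h1 h2 h3; clear -h1 h2 h3.
lia.
Qed.
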